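(* Consider a qutrit ($\mathbb{C}^3$) with coupling operators the eight Gell-Mann matrices $\sigma^s_{01},\sigma^s_{02},\sigma^s_{12},\sigma^a_{01},\sigma^a_{02},\sigma^a_{12},\sigma^d_1,\sigma^d_2$ and vanishing Hamiltonian. Then the quantum filtering equation in projective coordinates $W=(1,w_1,w_2)$, \[ dw_k=\frac12\sum_j[w_k(L_j^*L_jW)_0-(L_j^*L_jW)_k]\,dt+\sum_j[w_k(L_jW)_0^2-(L_jW)_0(L_jW)_k]\,dt+\sum_j[(L_jW)_k-w_k(L_jW)_0]\,dY^j_t,\quad k=1,2, \] (with $j$ running over the eight Gell-Mann matrices $L_j$ and $Y=(Y^j)$ an eight-dimensional process indexed correspondingly as $Y^{01,s},Y^{02,s},Y^{12,s},Y^{01,a},Y^{02,a},Y^{12,a},Y^{1,d},Y^{2,d}$) takes the form \[ \begin{aligned} dw_1&=(1-w_1^2)\,dY^{01,s}_t-w_1w_2\,dY^{02,s}_t+w_2\,dY^{12,s}_t+i(1+w_1^2)\,dY^{01,a}_t+iw_1w_2\,dY^{02,a}_t-iw_2\,dY^{12,a}_t-2w_1\,dY^{1,d}_t,\\ dw_2&=-w_1w_2\,dY^{01,s}_t+(1-w_2^2)\,dY^{02,s}_t+w_1\,dY^{12,s}_t+iw_1w_2\,dY^{01,a}_t+i(1+w_2^2)\,dY^{02,a}_t+iw_1\,dY^{12,a}_t-w_2\,dY^{1,d}_t-\sqrt3\,w_2\,dY^{2,d}_t, \end{aligned} \] with all $dt$-terms vanishing. Moreover, the equation has exactly the same form when rewritten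 in terms of the innovation process $B$ defined by $dB^{jk,s}_t=dY^{jk,s}_t-2\langle\sigma^s_{jk}\rangle_W\,dt$, $dB^{jk,a}_t=dY^{jk,a}_t-2\langle\sigma^a_{jk}\rangle_W\,dt$, $dB^{k,d}_t=dY^{k,d}_t-2\langle\sigma^d_k\rangle_W\,dt$. Finally, when $Y$ is a standard eight-dimensional Wiener process, the diffusion operator $D$ of this system equals $2\Delta_{pro}$, where \[ \Delta_{pro}S=(1+|w_1|^2+|w_2|^2)\Big[(1+|w_1|^2)\frac{\partial^2S}{\partial w_1\partial\bar w_1}+(1+|w_2|^2)\frac{\partial^2S}{\partial w_2\partial\bar w_2}+w_1\bar w_2\frac{\partial^2S}{\partial w_1\partial\bar w_2}+\bar w_1w_2\frac{\partial^2S}{\partial\bar w_1\partial w_2}\Big] \] is the second order part of the Laplace–Beltrami operator on the complex projective space $P\mathbb{C}^2$.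
   Context: Indices of vectors in $\mathbb{C}^3$ run over $0,1,2$; $(v)_k$ is the $k$-th coordinate. The Gell-Mann matrices: $\sigma^s_{jk}$ ($0\le j<k\le2$) has entries $1$ at positions $(j,k)$ and $(k,j)$ and $0$ elsewhere; $\sigma^a_{jk}$ ($0\le j<k\le 2$) has $-i$ at $(j,k)$, $i$ at $(k,j)$ and $0$ elsewhere; $\sigma^d_1=\mathrm{diag}(1,-1,0)$, $\sigma^d_2=\frac1{\sqrt3}\mathrm{diag}(1,1,-2)$. For a matrix $A$, $\langle A\rangle_W=(W,AW)/(W,W)$ with the standard Hermitian inner product. The projective coordinates are $w_k=\chi_k/\chi_0$ for a state vector $\chi\in\mathbb{C}^3$. *)

(* Defs.v *)
From mathcomp Require Import all_boot all_order all_algebra.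
Set Implicit Arguments.
Unset Strict Implicit.
Unset Printing Implicit Defensive.
Import Order.TTheory GRing.Theory Num.Theory.
Local Open Scope ring_scope.

Section QutritDefs.
Variable C : numClosedFieldType.

Definition gm_s (j k : 'I_3) : 'M[C]_3 :=
  \matrix_(r, c) (if ((r == j) && (c == k)) || ((r == k) && (c == j)) then 1 else 0).
Definition gm_a (j k : 'I_3) : 'M[C]_3 :=
  \matrix_(r, c) (if (r == j) && (c == k) then - 'i
                  else if (r == k) && (c == j) then 'i else 0).
Definition gm_d1 : 'M[C]_3 :=
  \matrix_(r, c) (if r == c then [:: 1; -1; 0]`_r else 0).
Definition gm_d2 : 'M[C]_3 :=
  (sqrtC 3)^-1 *: \matrix_(r, c) (if r == c then [:: 1; 1; -2]`_r else 0).

Definition i0 : 'I_3 := inord 0.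
Definition i1 : 'I_3 := inord 1.
Definition i2 : 'I_3 := inord 2.

(* The eight coupling operators L_j, j : 'I_8, in the order
   s01, s02, s12, a01, a02, a12, d1, d2 (matching Y^{01,s},...,Y^{2,d}). *)
Definition L (j : 'I_8) : 'M[C]_3 :=
  match val j with
  | 0 => gm_s i0 i1 | 1 => gm_s i0 i2 | 2 => gm_s i1 i2
  | 3 => gm_a i0 i1 | 4 => gm_a i0 i2 | 5 => gm_a i1 i2
  | 6 => gm_d1 | _ => gm_d2
  end.

Definition adjmx (A : 'M[C]_3) : 'M[C]_3 := map_mx Num.conj A^T.

Definition Wvec (w1 w2 : C) : 'cV[C]_3 := \col_(i < 3) [:: 1; w1; w2]`_i.
Definition crd (v : 'cV[C]_3) (k : 'I_3) : C := v k 0.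

Definition hdot (u v : 'cV[C]_3) : C := \sum_(i < 3) (u i 0)^* * v i 0.
Definition expect (A : 'M[C]_3) (W : 'cV[C]_3) : C := hdot W (A *m W) / hdot W W.

(* dt-coefficient of dw_k in the filtering equation written with dY *)
Definition drift (k : 'I_3) (w1 w2 : C) : C :=
  let W := Wvec w1 w2 in
  2^-1 * \sum_(j < 8) (crd W k * crd (adjmx (L j) *m L j *m W) i0
                        - crd (adjmx (L j) *m L j *m W) k)
  + \sum_(j < 8) (crd W k * (crd (L j *m W) i0) ^+ 2
                  - crd (L j *m W) i0 * crd (L j *m W) k).

(* dY^j-coefficient of dw_k *)
Definition diffc (k : 'I_3) (j : 'I_8) (w1 w2 : C) : C :=
  let W := Wvec w1 w2 in crd (L j *m W) k - crd W k * crd (L j *m W) i0.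

(* dt-coefficient of dw_k after substituting dY^j = dB^j + 2 <L_j>_W dt *)
Definition drift_innov (k : 'I_3) (w1 w2 : C) : C :=
  drift k w1 w2 + \sum_(j < 8) diffc k j w1 w2 * (2 * expect (L j) (Wvec w1 w2)).

(* Second-order (diffusion) operators are represented through their action on
   the Wirtinger Hessian H of a C^2 function S at the point (w1,w2).
   Variables are indexed by 'I_4 as  0 = w1, 1 = w2, 2 = conj w1, 3 = conj w2,
   and H a b = d^2 S / (dz_a dz_b)  (symmetric in a, b). *)

Definition zcoef (a : 'I_4) (j : 'I_8) (w1 w2 : C) : C :=
  match val a with
  | 0 => diffc i1 j w1 w2
  | 1 => diffc i2 j w1 w2
  | 2 => (diffc i1 j w1 w2)^*
  | _ => (diffc i2 j w1 w2)^*
  end.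

(* Diffusion operator when Y is a standard 8-dim Wiener process
   (dY^j dY^l = delta_jl dt):  D S = 1/2 sum_{a,b} (dz_a dz_b / dt) S_{z_a z_b} *)
Definition diffusion_op (w1 w2 : C) (H : 'M[C]_4) : C :=
  2^-1 * \sum_(a < 4) \sum_(b < 4)
           (\sum_(j < 8) zcoef a j w1 w2 * zcoef b j w1 w2) * H a b.

Definition Delta_pro (w1 w2 : C) (H : 'M[C]_4) : C :=
  (1 + `|w1| ^+ 2 + `|w2| ^+ 2) *
  ((1 + `|w1| ^+ 2) * H (inord 0) (inord 2)
   + (1 + `|w2| ^+ 2) * H (inord 1) (inord 3)
   + w1 * w2^* * H (inord 0) (inord 3)
   + w1^* * w2 * H (inord 2) (inord 1)).

End QutritDefs.

(* Main.v *)
Require Import Defs.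
From mathcomp Require Import all_boot all_order all_algebra ring.
Import Order.TTheory GRing.Theory Num.Theory.
Local Open Scope ring_scope.

Lemma vi0 : nat_of_ord i0 = 0%N. Proof. by rewrite /i0 inordK. Qed.
Lemma vi1 : nat_of_ord i1 = 1%N. Proof. by rewrite /i1 inordK. Qed.
Lemma vi2 : nat_of_ord i2 = 2%N. Proof. by rewrite /i2 inordK. Qed.

Section S.
Variable C : numClosedFieldType.

Definition mx3 (a00 a01 a02 a10 a11 a12 a20 a21 a22 : C) : 'M[C]_3 :=
  \matrix_(r, c) nth 0 (nth [::] [:: [:: a00; a01; a02]; [:: a10; a11; a12]; [:: a20; a21; a22]] r) c.
Definition cv3 (x y z : C) : 'cV[C]_3 := \col_(i < 3) [:: x; y; z]`_i.

Lemma sum3 (F : 'I_3 -> C) : \sum_(i < 3) F i = F i0 + F i1 + F i2.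
Proof.
rewrite !big_ord_recl big_ord0 addr0 !addrA.
by congr (_ + _ + _); congr F; apply/val_inj; rewrite /= ?vi0 ?vi1 ?vi2.
Qed.

Lemma ord3P (i : 'I_3) : i = i0 \/ i = i1 \/ i = i2.
Proof.
case: i => [[|[|[|//]]] Hi]; [left|right;left|right;right]; apply/val_inj;
  by rewrite /= ?vi0 ?vi1 ?vi2.
Qed.

Lemma mx3E a00 a01 a02 a10 a11 a12 a20 a21 a22 (r c : 'I_3) :
  mx3 a00 a01 a02 a10 a11 a12 a20 a21 a22 r c =
  nth 0 (nth [::] [:: [:: a00; a01; a02]; [:: a10; a11; a12]; [:: a20; a21; a22]] r) c.
Proof. by rewrite mxE. Qed.

Lemma mulmx3 a00 a01 a02 a10 a11 a12 a20 a21 a22 b00 b01 b02 b10 b11 b12 b20 b21 b22 :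
  mx3 a00 a01 a02 a10 a11 a12 a20 a21 a22 *m mx3 b00 b01 b02 b10 b11 b12 b20 b21 b22 =
  mx3 (a00*b00+a01*b10+a02*b20) (a00*b01+a01*b11+a02*b21) (a00*b02+a01*b12+a02*b22)
      (a10*b00+a11*b10+a12*b20) (a10*b01+a11*b11+a12*b21) (a10*b02+a11*b12+a12*b22)
      (a20*b00+a21*b10+a22*b20) (a20*b01+a21*b11+a22*b21) (a20*b02+a21*b12+a22*b22).
Proof.
apply/matrixP => r c; rewrite mxE sum3 !mx3E.
by case: (ord3P r) => [->|[->|->]]; case: (ord3P c) => [->|[->|->]];
  rewrite ?vi0 ?vi1 ?vi2 /=.
Qed.

Lemma mulmxcv3 a00 a01 a02 a10 a11 a12 a20 a21 a22 x y z :
  mx3 a00 a01 a02 a10 a11 a12 a20 a21 a22 *m cv3 x y z =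
  cv3 (a00*x+a01*y+a02*z) (a10*x+a11*y+a12*z) (a20*x+a21*y+a22*z).
Proof.
apply/matrixP => r c; rewrite !mxE sum3 !mx3E !mxE.
by case: (ord3P r) => [->|[->|->]]; rewrite ?vi0 ?vi1 ?vi2.
Qed.

Lemma adjmx3 a00 a01 a02 a10 a11 a12 a20 a21 a22 :
  adjmx (mx3 a00 a01 a02 a10 a11 a12 a20 a21 a22) =
  mx3 a00^* a10^* a20^* a01^* a11^* a21^* a02^* a12^* a22^*.
Proof.
apply/matrixP => r c; rewrite /adjmx !mxE.
by case: (ord3P r) => [->|[->|->]]; case: (ord3P c) => [->|[->|->]];
  rewrite ?vi0 ?vi1 ?vi2.
Qed.

Lemma crd0 x y z : crd (cv3 x y z) i0 = x. Proof. by rewrite /crd mxE vi0. Qed.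
Lemma crd1 x y z : crd (cv3 x y z) i1 = y. Proof. by rewrite /crd mxE vi1. Qed.
Lemma crd2 x y z : crd (cv3 x y z) i2 = z. Proof. by rewrite /crd mxE vi2. Qed.
Lemma WvecE w1 w2 : Wvec w1 w2 = cv3 1 w1 w2. Proof. by []. Qed.
Lemma hdot3 x y z x' y' z' : hdot (cv3 x y z) (cv3 x' y' z') = x^* * x' + y^* * y' + z^* * z'.
Proof. by rewrite /hdot sum3 !mxE ?vi0 ?vi1 ?vi2. Qed.

Ltac gmtac := apply/matrixP; let r := fresh "r" in let c := fresh "c" in move=> r c;
  case: (ord3P r) => [->|[->|->]]; case: (ord3P c) => [->|[->|->]];
  rewrite !mxE -?val_eqE /= ?vi0 ?vi1 ?vi2 //= ?mulr1 ?mulr0 ?mulrN.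

Lemma L0 : L C (inord 0) = mx3 0 1 0 1 0 0 0 0 0. Proof. rewrite /L /= inordK //; gmtac. Qed.
Lemma L1 : L C (inord 1) = mx3 0 0 1 0 0 0 1 0 0. Proof. rewrite /L /= inordK //; gmtac. Qed.
Lemma L2 : L C (inord 2) = mx3 0 0 0 0 0 1 0 1 0. Proof. rewrite /L /= inordK //; gmtac. Qed.
Lemma L3 : L C (inord 3) = mx3 0 (-'i) 0 'i 0 0 0 0 0. Proof. rewrite /L /= inordK //; gmtac. Qed.
Lemma L4 : L C (inord 4) = mx3 0 0 (-'i) 0 0 0 'i 0 0. Proof. rewrite /L /= inordK //; gmtac. Qed.
Lemma L5 : L C (inord 5) = mx3 0 0 0 0 0 (-'i) 0 'i 0. Proof. rewrite /L /= inordK //; gmtac. Qed.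
Lemma L6 : L C (inord 6) = mx3 1 0 0 0 (-1) 0 0 0 0. Proof. rewrite /L /= inordK //; gmtac. Qed.
Lemma L7 : L C (inord 7) = mx3 (sqrtC 3)^-1 0 0 0 (sqrtC 3)^-1 0 0 0 (-((sqrtC 3)^-1 * 2)).
Proof. rewrite /L /= inordK //; by gmtac. Qed.

Lemma sum8 (F : 'I_8 -> C) : \sum_(j < 8) F j =
  F (inord 0) + F (inord 1) + F (inord 2) + F (inord 3) + F (inord 4) + F (inord 5)
  + F (inord 6) + F (inord 7).
Proof.
rewrite !big_ord_recl big_ord0 addr0 !addrA.
repeat congr (_ + _); congr F; apply: ord_inj; by rewrite /= inordK.
Qed.

Lemma sum4 (F : 'I_4 -> C) : \sum_(j < 4) F j =
  F (inord 0) + F (inord 1) + F (inord 2) + F (inord 3).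
Proof.
rewrite !big_ord_recl big_ord0 addr0 !addrA.
repeat congr (_ + _); congr F; apply: ord_inj; by rewrite /= inordK.
Qed.

Lemma ord8P (j : 'I_8) : exists2 n, (n < 8)%N & j = inord n.
Proof. by exists (nat_of_ord j) => //; apply: ord_inj; rewrite inordK. Qed.

Lemma hs : ((sqrtC 3 : C)^-1)^* = (sqrtC 3)^-1.
Proof. by rewrite geC0_conj // invr_ge0 sqrtC_ge0 ler0n. Qed.
Lemma hr : ((sqrtC 3 : C))^* = (sqrtC 3).
Proof. by rewrite geC0_conj // sqrtC_ge0 ler0n. Qed.
Lemma Hi : ('i : C) ^+ 2 = -1. Proof. exact: sqrCi. Qed.
Lemma Hs : ((sqrtC 3 : C)^-1) ^+ 2 * 3 = 1.
Proof. by rewrite exprVn sqrtCK mulVf // pnatr_eq0. Qed.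
Lemma Hr : ((sqrtC 3 : C)) ^+ 2 = 3.
Proof. by rewrite sqrtCK. Qed.
Lemma Hrs : ((sqrtC 3 : C)) * (sqrtC 3)^-1 = 1.
Proof. by rewrite mulfV // sqrtC_eq0 pnatr_eq0. Qed.

Lemma Hr3 : sqrtC 3 = 3 * (sqrtC 3 : C)^-1.
Proof. by rewrite -{2}[3](sqrtCK (3 : C)) -mulrA mulfV ?mulr1 // sqrtC_eq0 pnatr_eq0. Qed.
Ltac Lsimp := rewrite ?L0 ?L1 ?L2 ?L3 ?L4 ?L5 ?L6 ?L7 ?WvecE ?adjmx3 ?mulmx3 ?mulmxcv3
   ?crd0 ?crd1 ?crd2 ?hdot3.
Lemma cN (x : C) : (-x)^* = - x^*. Proof. exact: rmorphN. Qed.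
Lemma cM (x y : C) : (x * y)^* = x^* * y^*. Proof. exact: rmorphM. Qed.
Lemma cD (x y : C) : (x + y)^* = x^* + y^*. Proof. exact: rmorphD. Qed.
Lemma cB (x y : C) : (x - y)^* = x^* - y^*. Proof. exact: rmorphB. Qed.
Lemma cX (x : C) n : (x ^+ n)^* = x^* ^+ n. Proof. exact: rmorphXn. Qed.
Lemma c2 : (2 : C)^* = 2. Proof. exact: conjC_nat. Qed.
Ltac csimp := rewrite ?(hs, hr, conjC0, conjC1, conjCi, c2, cN, cM, cD, cB, cX).

Lemma part2 (w1 w2 : C) (j : 'I_8) :
        diffc i1 j w1 w2 =
        [:: 1 - w1 ^+ 2; - (w1 * w2); w2; 'i * (1 + w1 ^+ 2); 'i * (w1 * w2);
            - ('i * w2); - (2 * w1); 0]`_j.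
Proof.
have Hi := Hi; have Hs := Hs; have Hrs := Hrs.
case: (ord8P j) => n Hn ->; rewrite /diffc inordK //.
do 8! (case: n Hn => [_|n Hn]; first by Lsimp => /=; ring: Hi Hs Hrs).
by [].
Qed.

Lemma part3 (w1 w2 : C) (j : 'I_8) :
        diffc i2 j w1 w2 =
        [:: - (w1 * w2); 1 - w2 ^+ 2; w1; 'i * (w1 * w2); 'i * (1 + w2 ^+ 2);
            'i * w1; - w2; - (sqrtC 3 * w2)]`_j.
Proof.
have Hi := Hi; have Hs := Hs; have Hrs := Hrs.
case: (ord8P j) => n Hn ->; rewrite /diffc inordK //.
do 8! (case: n Hn => [_|n Hn]; first by Lsimp => /=; try rewrite [in RHS]Hr3; ring: Hi Hs).
by [].
Qed.

Lemma part1 (w1 w2 : C) (k : 'I_3) : (0 < k)%N -> drift k w1 w2 = 0.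
Proof.
have Hi := Hi; have Hs := Hs.
case: (ord3P k) => [->|[->|->]]; rewrite ?vi0 // => _;
rewrite /drift !sum8; Lsimp; csimp.
all: have Hr := Hr; have Hr0 : (sqrtC 3 : C) != 0 by rewrite sqrtC_eq0 pnatr_eq0.
all: field: Hi Hr.
all: exact: Hr0.
Qed.

Lemma hdotW (w1 w2 : C) : hdot (Wvec w1 w2) (Wvec w1 w2) = 1 + `|w1| ^+ 2 + `|w2| ^+ 2.
Proof. rewrite WvecE hdot3 !normCK conjC1 mul1r [w1^* * _]mulrC [w2^* * _]mulrC //. Qed.

Lemma hdotW0 (w1 w2 : C) : hdot (Wvec w1 w2) (Wvec w1 w2) != 0.
Proof.
rewrite hdotW; apply: lt0r_neq0.
by apply: ltr_wpDr; rewrite ?exprn_ge0 //; apply: ltr_wpDr; rewrite ?exprn_ge0 ?ltr01.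
Qed.

Lemma part4 (w1 w2 : C) (k : 'I_3) : (0 < k)%N -> drift_innov k w1 w2 = 0.
Proof.
move=> hk; rewrite /drift_innov part1 // add0r /expect.
have hD := hdotW0 w1 w2.
move: (hdot (Wvec w1 w2) (Wvec w1 w2)) hD => D hD.
have Hi := Hi; have Hr := Hr; have Hr0 : (sqrtC 3 : C) != 0 by rewrite sqrtC_eq0 pnatr_eq0.
move: hk; case: (ord3P k) => [->|[->|->]]; rewrite ?vi0 // => _;
rewrite !sum8 ?part2 ?part3 !inordK //=; Lsimp; csimp.
all: field: Hi Hr.
all: by rewrite ?hD ?Hr0.
Qed.

Lemma part5 (w1 w2 : C) (H : 'M[C]_4) : H^T = H ->
        diffusion_op w1 w2 H = 2 * Delta_pro w1 w2 H.
Proof.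
move=> HT.
have HS (a b : 'I_4) : H a b = H b a by rewrite -{1}HT mxE.
have Hi := Hi; have Hr := Hr.
rewrite /diffusion_op /Delta_pro !sum4 !sum8 /zcoef /= !inordK //.
rewrite ?part2 ?part3 /= !inordK //=.
rewrite (HS (inord 1) (inord 0)) (HS (inord 2) (inord 0)) (HS (inord 3) (inord 0)).
rewrite (HS (inord 2) (inord 1)) (HS (inord 3) (inord 1)) (HS (inord 3) (inord 2)).
rewrite !normCK; csimp.
field: Hi Hr.
all: done.
Qed.

Lemma main :
  (forall (w1 w2 : C) (k : 'I_3), (0 < k)%N -> drift k w1 w2 = 0)
  /\ (forall (w1 w2 : C) (j : 'I_8),
        diffc i1 j w1 w2 =
        [:: 1 - w1 ^+ 2; - (w1 * w2); w2; 'i * (1 + w1 ^+ 2); 'i * (w1 * w2);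
            - ('i * w2); - (2 * w1); 0]`_j)
  /\ (forall (w1 w2 : C) (j : 'I_8),
        diffc i2 j w1 w2 =
        [:: - (w1 * w2); 1 - w2 ^+ 2; w1; 'i * (w1 * w2); 'i * (1 + w2 ^+ 2);
            'i * w1; - w2; - (sqrtC 3 * w2)]`_j)
  /\ (forall (w1 w2 : C) (k : 'I_3), (0 < k)%N -> drift_innov k w1 w2 = 0)
  /\ (forall (w1 w2 : C) (H : 'M[C]_4), H^T = H ->
        diffusion_op w1 w2 H = 2 * Delta_pro w1 w2 H).
Proof.
split; first exact: part1.
split; first exact: part2.
split; first exact: part3.
split; first exact: part4.
exact: part5.
Qed.

End S.

Theorem proposition4p1 (C : numClosedFieldType) :
  (* all dt-terms vanish *)
  (forall (w1 w2 : C) (k : 'I_3), (0 < k)%N -> drift k w1 w2 = 0)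
  (* the dY-coefficients of dw_1 *)
  /\ (forall (w1 w2 : C) (j : 'I_8),
        diffc i1 j w1 w2 =
        [:: 1 - w1 ^+ 2; - (w1 * w2); w2; 'i * (1 + w1 ^+ 2); 'i * (w1 * w2);
            - ('i * w2); - (2 * w1); 0]`_j)
  (* the dY-coefficients of dw_2 *)
  /\ (forall (w1 w2 : C) (j : 'I_8),
        diffc i2 j w1 w2 =
        [:: - (w1 * w2); 1 - w2 ^+ 2; w1; 'i * (w1 * w2); 'i * (1 + w2 ^+ 2);
            'i * w1; - w2; - (sqrtC 3 * w2)]`_j)
  (* same form in terms of the innovation process B: dt-terms still vanish *)
  /\ (forall (w1 w2 : C) (k : 'I_3), (0 < k)%N -> drift_innov k w1 w2 = 0)
  (* diffusion operator D = 2 Delta_pro *)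
  /\ (forall (w1 w2 : C) (H : 'M[C]_4), H^T = H ->
        diffusion_op w1 w2 H = 2 * Delta_pro w1 w2 H).
Proof. exact: main. Qed.
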